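(* Let $\mathcal H$ be a complex Hilbert space and $A,X,B\in\mathcal B(\mathcal H)$ with $X$ positive. Then for all $x,y\in\mathcal H$ with $Bx\neq0$, $$|\langle AXBx,y\rangle|\le\frac{\|X\|}{2}\left(2\|Bx\|\,\|A^*y\|-\frac{\inf_{\lambda\in\mathbb C}\|Bx-\lambda A^*y\|^2}{2\|Bx\|}\,\|A^*y\|\right).$$
   Context: $\|X\|$ is the operator norm. *)

(* Defs.v *)
From HB Require Import structures.
From mathcomp Require Import all_boot all_order all_algebra.
From mathcomp Require Import all_classical reals.
From mathcomp Require Import complex.
Set Implicit Arguments. Unset Strict Implicit. Unset Printing Implicit Defensive.
Import Order.TTheory GRing.Theory Num.Theory.
Local Open Scope ring_scope.
Local Open Scope classical_set_scope.

Section HilbertDefs.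
Variables (R : realType) (V : lmodType R[i]) (ip : V -> V -> R[i]).

Definition is_inner_product : Prop :=
  [/\ (forall (a : R[i]) (x y z : V), ip (a *: x + y) z = a * ip x z + ip y z),
      (forall x y : V, ip x y = conjc (ip y x)),
      (forall x : V, 0 <= ip x x) &
      (forall x : V, ip x x = 0 -> x = 0)].

Definition vnorm (x : V) : R := Num.sqrt (complex.Re (ip x x)).

Definition ip_complete : Prop :=
  forall u : nat -> V,
    (forall e : R, 0 < e -> exists N : nat, forall m n : nat,
        (N <= m)%N -> (N <= n)%N -> vnorm (u m - u n) < e) ->
    exists l : V, forall e : R, 0 < e -> exists N : nat, forall n : nat,
        (N <= n)%N -> vnorm (u n - l) < e.

Definition bounded_op (T : {linear V -> V}) : Prop :=
  exists M : R, forall x : V, vnorm (T x) <= M * vnorm x.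

Definition opnorm (T : {linear V -> V}) : R :=
  sup [set vnorm (T x) | x in [set x : V | vnorm x <= 1]].

Definition is_adjoint (T Ts : {linear V -> V}) : Prop :=
  forall x y : V, ip (T x) y = ip x (Ts y).

Definition positive_op (T : {linear V -> V}) : Prop :=
  forall x : V, 0 <= ip (T x) x.

End HilbertDefs.

(* Main.v *)
Require Import Defs.
From HB Require Import structures.
From mathcomp Require Import all_boot all_order all_algebra.
From mathcomp Require Import all_classical reals.
From mathcomp Require Import complex.
From mathcomp Require Import ring lra.
Set Implicit Arguments. Unset Strict Implicit.
Import Order.TTheory GRing.Theory Num.Theory.
Local Open Scope ring_scope.
Local Open Scope classical_set_scope.
Local Open Scope complex_scope.
Local Open Scope ring_scope.

Lemma ipDZl (R : realType) (V : lmodType R[i]) (ip : V -> V -> R[i])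
  (Hip : is_inner_product ip) a x y z : ip (a *: x + y) z = a * ip x z + ip y z.
Proof. by case: Hip. Qed.

Lemma ipC (R : realType) (V : lmodType R[i]) (ip : V -> V -> R[i])
  (Hip : is_inner_product ip) x y : ip x y = conjc (ip y x).
Proof. by case: Hip. Qed.

Lemma ip0l (R : realType) (V : lmodType R[i]) (ip : V -> V -> R[i])
  (Hip : is_inner_product ip) z : ip 0 z = 0.
Proof.
have h := ipDZl Hip 1 0 0 z; rewrite scaler0 addr0 mul1r in h.
by have := congr1 (fun t => t - ip 0 z) h; rewrite /= addrK subrr => ->.
Qed.

Lemma ipDl (R : realType) (V : lmodType R[i]) (ip : V -> V -> R[i])
  (Hip : is_inner_product ip) x y z : ip (x + y) z = ip x z + ip y z.
Proof. by rewrite -{1}(scale1r x) ipDZl // mul1r. Qed.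

Lemma ipZl (R : realType) (V : lmodType R[i]) (ip : V -> V -> R[i])
  (Hip : is_inner_product ip) a x z : ip (a *: x) z = a * ip x z.
Proof. by rewrite -(addr0 (a *: x)) ipDZl // ip0l // addr0. Qed.

Lemma ipDr (R : realType) (V : lmodType R[i]) (ip : V -> V -> R[i])
  (Hip : is_inner_product ip) x y z : ip x (y + z) = ip x y + ip x z.
Proof. by rewrite (ipC Hip x (y+z)) (ipC Hip x y) (ipC Hip x z) ipDl // rmorphD. Qed.

Lemma ipZr (R : realType) (V : lmodType R[i]) (ip : V -> V -> R[i])
  (Hip : is_inner_product ip) a x z : ip x (a *: z) = conjc a * ip x z.
Proof. by rewrite (ipC Hip x (a *: z)) (ipC Hip x z) ipZl // rmorphM. Qed.

Lemma ip0r (R : realType) (V : lmodType R[i]) (ip : V -> V -> R[i])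
  (Hip : is_inner_product ip) z : ip z 0 = 0.
Proof. by rewrite ipC // ip0l // conjc0. Qed.

Lemma ip_exp (R : realType) (V : lmodType R[i]) (ip : V -> V -> R[i])
  (Hip : is_inner_product ip) a x1 y1 x2 y2 :
  ip (x1 + a *: y1) (x2 + a *: y2) =
  ip x1 x2 + conjc a * ip x1 y2 + a * ip y1 x2 + a * conjc a * ip y1 y2.
Proof. rewrite !(ipDl Hip, ipDr Hip, ipZl Hip, ipZr Hip); ring. Qed.

Lemma Re_real_mul (R : realType) (r : R) (z : R[i]) : complex.Re (r%:C * z) = r * complex.Re z.
Proof. by case: z => a b /=; rewrite mul0r subr0. Qed.



Lemma nz_C (R : realType) (z : R[i]) : `|z| = (complex.Re `|z|)%:C.
Proof. by rewrite normc_def. Qed.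

Lemma nz_ge0 (R : realType) (z : R[i]) : 0 <= complex.Re `|z|.
Proof. by rewrite normc_def /= sqrtr_ge0. Qed.

Lemma nzM (R : realType) (a b : R[i]) :
  complex.Re `|a * b| = complex.Re `|a| * complex.Re `|b|.
Proof.
have := normrM a b; rewrite (nz_C (a*b)) (nz_C a) (nz_C b) -rmorphM.
by move/complexI.
Qed.

Lemma nz_real (R : realType) (r : R) : complex.Re `|r%:C| = `|r|.
Proof. by rewrite normc_def /= expr0n /= addr0 sqrtr_sqr. Qed.

Lemma Re_le_nz (R : realType) (z : R[i]) : complex.Re z <= complex.Re `|z|.
Proof.
have := normc_ge_Re z; rewrite (nz_C z) lecR => h.
exact: le_trans (ler_norm _) h.
Qed.

Lemma nz_sq (R : realType) (z : R[i]) : ((complex.Re `|z|) ^+ 2)%:C = z * conjc z.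
Proof. by rewrite -sqr_normc [in RHS](nz_C z) -rmorphXn. Qed.

Lemma ReD (R : realType) (x y : R[i]) : complex.Re (x + y) = complex.Re x + complex.Re y.
Proof. by case: x; case: y. Qed.

Lemma ReN (R : realType) (x : R[i]) : complex.Re (- x) = - complex.Re x.
Proof. by case: x. Qed.

Lemma ReJ (R : realType) (x : R[i]) : complex.Re (conjc x) = complex.Re x.
Proof. by case: x. Qed.

Lemma Re_i_real (R : realType) (r : R) : complex.Re ('i * r%:C) = 0.
Proof. by rewrite /= mul0r mulr0 subr0. Qed.

Lemma conj_i (R : realType) : conjc ('i : R[i]) = - 'i.
Proof. by apply/eqP; rewrite eq_complex /= oppr0 !eqxx. Qed.

Lemma ipww (R : realType) (V : lmodType R[i]) (ip : V -> V -> R[i])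
  (Hip : is_inner_product ip) w : ip w w = ((vnorm ip w) ^+ 2)%:C.
Proof.
case: Hip => _ _ hp _; have := hp w; rewrite lecE => /andP[/eqP hI hR].
rewrite /vnorm sqr_sqrtr //; move: hI hR; case: (ip w w) => a b /= -> //.
Qed.

Lemma Reipww (R : realType) (V : lmodType R[i]) (ip : V -> V -> R[i])
  (Hip : is_inner_product ip) w : complex.Re (ip w w) = (vnorm ip w) ^+ 2.
Proof. by rewrite ipww. Qed.

Lemma vnorm_ge0 (R : realType) (V : lmodType R[i]) (ip : V -> V -> R[i]) w :
  0 <= vnorm ip w.
Proof. exact: sqrtr_ge0. Qed.

Lemma vnorm0 (R : realType) (V : lmodType R[i]) (ip : V -> V -> R[i])
  (Hip : is_inner_product ip) w : vnorm ip w = 0 -> w = 0.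
Proof.
move=> h; case: (Hip) => _ _ _; apply; by rewrite (ipww Hip) h expr0n.
Qed.

Lemma vnormZ (R : realType) (V : lmodType R[i]) (ip : V -> V -> R[i])
  (Hip : is_inner_product ip) a w :
  vnorm ip (a *: w) = complex.Re `|a| * vnorm ip w.
Proof.
rewrite {1}/vnorm ipZl // ipZr // mulrA mulrC (ipww Hip) -nz_sq -rmorphM /=.
rewrite -exprMn sqrtr_sqr ger0_norm; first exact: mulrC.
exact: mulr_ge0 (vnorm_ge0 _ _) (nz_ge0 a).
Qed.

Lemma proj_id (R : realType) (V : lmodType R[i]) (ip : V -> V -> R[i])
  (Hip : is_inner_product ip) x y : vnorm ip y != 0 ->
  (vnorm ip (x + (- (ip x y / ip y y)) *: y)) ^+ 2 =
  (vnorm ip x) ^+ 2 - (complex.Re `|ip x y|) ^+ 2 / (vnorm ip y) ^+ 2.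
Proof.
move=> hy.
have hn : ip y y != 0.
  by rewrite (ipww Hip y) (inj_eq (@complexI R)) expf_neq0.
have E : ip (x + (- (ip x y / ip y y)) *: y) (x + (- (ip x y / ip y y)) *: y)
   = ip x x - ip x y * conjc (ip x y) / ip y y.
  rewrite ip_exp // [ip y x](ipC Hip) rmorphN fmorph_div /=.
  rewrite -(ipC Hip y y).
  by field.
apply: complexI; rewrite -(ipww Hip) E (ipww Hip x) (ipww Hip y) -nz_sq.
by rewrite rmorphB fmorph_div.
Qed.

Lemma CS (R : realType) (V : lmodType R[i]) (ip : V -> V -> R[i])
  (Hip : is_inner_product ip) x y :
  complex.Re `|ip x y| <= vnorm ip x * vnorm ip y.
Proof.
have [hy|hy] := eqVneq (vnorm ip y) 0.
  by rewrite hy mulr0 (vnorm0 Hip hy) ip0r // normr0.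
have h := proj_id Hip x hy.
have h0 : 0 <= (vnorm ip (x + (- (ip x y / ip y y)) *: y)) ^+ 2 by exact: sqr_ge0.
rewrite h subr_ge0 ler_pdivrMr ?exprn_gt0 ?lt0r ?hy ?vnorm_ge0 // in h0.
have := nz_ge0 (ip x y); have := vnorm_ge0 ip x; have := vnorm_ge0 ip y.
rewrite -exprMn in h0.
have := mulr_ge0 (vnorm_ge0 ip x) (vnorm_ge0 ip y); nra.
Qed.

Lemma Re_ipXww_le (R : realType) (V : lmodType R[i]) (ip : V -> V -> R[i])
  (Hip : is_inner_product ip) (X : {linear V -> V}) m
  (hm : forall w, vnorm ip (X w) <= m * vnorm ip w) (hm0 : 0 <= m) w :
  complex.Re (ip (X w) w) <= m * (vnorm ip w) ^+ 2.
Proof.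
apply: le_trans (Re_le_nz _) _; apply: le_trans (CS Hip _ _) _.
rewrite expr2 mulrA; apply: ler_wpM2r; [exact: vnorm_ge0 | exact: hm].
Qed.

Lemma opnorm_props (R : realType) (V : lmodType R[i]) (ip : V -> V -> R[i])
  (Hip : is_inner_product ip) (X : {linear V -> V}) (hX : bounded_op ip X) :
  0 <= opnorm ip X /\ forall w, vnorm ip (X w) <= opnorm ip X * vnorm ip w.
Proof.
have hv0 : vnorm ip (0 : V) = 0 by rewrite /vnorm ip0r //= sqrtr0.
case: hX => M hM.
set S := [set vnorm ip (X x) | x in [set x : V | vnorm ip x <= 1]].
have hub : has_ubound S.
  exists `|M| => _ [x /= hx <-].
  apply: le_trans (hM x) _.
  have := vnorm_ge0 ip x; have := ler_norm M; have := normr_ge0 M; nra.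
have hsup := ub_le_sup hub.
have m0 : 0 <= opnorm ip X.
  apply: hsup; exists 0; first by rewrite /= hv0.
  by rewrite linear0 hv0.
split => // w.
have [hw|hw] := eqVneq (vnorm ip w) 0.
  by rewrite (vnorm0 Hip hw) linear0 hv0 mulr0.
have t0 : 0 < vnorm ip w by rewrite lt0r hw vnorm_ge0.
have h1 : vnorm ip ((vnorm ip w)^-1%:C *: w) = 1.
  by rewrite vnormZ // nz_real ger0_norm ?invr_ge0 ?vnorm_ge0 // mulVf.
have : S (vnorm ip (X ((vnorm ip w)^-1%:C *: w))).
  by exists ((vnorm ip w)^-1%:C *: w) => //=; rewrite h1.
move/hsup; rewrite linearZ /= vnormZ // nz_real ger0_norm ?invr_ge0 ?vnorm_ge0 //.
by rewrite mulrC -ler_pdivlMr ?invr_gt0 // invrK.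
Qed.

Lemma polar (R : realType) (V : lmodType R[i]) (ip : V -> V -> R[i])
  (Hip : is_inner_product ip) (X : {linear V -> V}) x y :
  let E a := ip (X (x + a *: y)) (x + a *: y) in
  E 1 - E (-1) + 'i * E 'i - 'i * E (- 'i) = 4%:R * ip (X x) y.
Proof.
move=> E.
have hE : forall a, E a = ip (X x) x + conjc a * ip (X x) y + a * ip (X y) x
    + a * conjc a * ip (X y) y.
  by move=> a; rewrite /E linearD linearZ /= ip_exp.
have c1 : conjc (1 : R[i]) = 1 by apply/eqP; rewrite eq_complex /= oppr0 !eqxx.
have c2 : conjc (-1 : R[i]) = -1 by apply/eqP; rewrite eq_complex /= !oppr0 !eqxx.
have c3 : conjc ('i : R[i]) = -'i by apply/eqP; rewrite eq_complex /= !oppr0 !eqxx.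
have c4 : conjc (-'i : R[i]) = 'i by apply/eqP; rewrite eq_complex /= !oppr0 opprK !eqxx.
rewrite !hE c1 c2 c3 c4.
have hi : ('i : R[i]) * 'i = -1 by rewrite -expr2 sqr_i.
apply/eqP; rewrite -subr_eq0; apply/eqP.
transitivity ((('i : R[i]) * 'i + 1) * (2%:R * ip (X y) x - 2%:R * ip (X x) y)).
  by ring.
by rewrite hi addNr mul0r.
Qed.

Lemma Re_polar (R : realType) (V : lmodType R[i]) (ip : V -> V -> R[i])
  (Hip : is_inner_product ip) (X : {linear V -> V}) (hXpos : positive_op ip X) x y :
  4%:R * complex.Re (ip (X x) y) =
  complex.Re (ip (X (x + 1 *: y)) (x + 1 *: y))
  - complex.Re (ip (X (x + (-1) *: y)) (x + (-1) *: y)).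
Proof.
have hr : forall w, ip (X w) w = (complex.Re (ip (X w) w))%:C.
  move=> w; have := hXpos w; rewrite lecE => /andP[/eqP hI _].
  by move: hI; case: (ip (X w) w) => a b /= ->.
have := congr1 (@complex.Re R) (polar Hip X x y) => /=.
rewrite (hr (x + 'i *: y)) (hr (x + (- 'i) *: y)).
rewrite !ReD !ReN !Re_i_real subr0 addr0 => ->.
have -> : (4%:R : R[i]) = (4%:R : R)%:C by rewrite rmorph_nat.
by rewrite Re_real_mul.
Qed.

Lemma core (R : realType) (V : lmodType R[i]) (ip : V -> V -> R[i])
  (Hip : is_inner_product ip) (X : {linear V -> V}) (hXpos : positive_op ip X)
  m (hm0 : 0 <= m) (hm : forall w, vnorm ip (X w) <= m * vnorm ip w) u v :
  0 < vnorm ip u ->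
  2 * complex.Re `|ip (X u) v| <= m * (vnorm ip u * vnorm ip v + complex.Re `|ip u v|).
Proof.
move=> hu.
have c0 := nz_ge0 (ip u v).
have rhs0 : 0 <= m * (vnorm ip u * vnorm ip v + complex.Re `|ip u v|).
  by apply: mulr_ge0 => //; apply: addr_ge0 => //; apply: mulr_ge0; apply: vnorm_ge0.
have [hz|hz] := eqVneq (ip (X u) v) 0.
  by rewrite hz normr0 /= mulr0.
have hv : vnorm ip v != 0.
  by apply: contraNneq hz => /(vnorm0 Hip) ->; rewrite ip0r.
have hv0 : 0 < vnorm ip v by rewrite lt0r hv vnorm_ge0.
set z := ip (X u) v in hz *.
have nz0 : `|z| != 0 by rewrite normr_eq0.
set s := vnorm ip v / vnorm ip u.
have s0 : 0 < s by rewrite divr_gt0.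
set w := conjc z / `|z|.
have hw : complex.Re `|w| = 1.
  by rewrite /w normf_div normcJ normr_id divff.
have hsw : complex.Re `|s%:C * w| = s by rewrite nzM hw mulr1 nz_real gtr0_norm.
set u' := (s%:C * w) *: u.
have ha : ip (X u') v = (s * complex.Re `|z|)%:C.
  have -> : (s * complex.Re `|z|)%:C = s%:C * `|z| by rewrite [`|z|]nz_C rmorphM.
  rewrite /u' linearZ ipZl // -mulrA; congr (_ * _).
  rewrite /w mulrAC [conjc z * z]mulrC -sqr_normc expr2 mulfK //.
have hp := Re_polar Hip hXpos u' v.
have hRe : forall r : R, complex.Re r%:C = r by [].
rewrite ha hRe in hp.
have e1 := Re_ipXww_le Hip hm hm0 (u' + 1 *: v).
have e2 : 0 <= complex.Re (ip (X (u' + (-1) *: v)) (u' + (-1) *: v)).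
  by have := hXpos (u' + (-1) *: v); rewrite lecE => /andP[].
have n1 : (vnorm ip (u' + 1 *: v)) ^+ 2 =
    (vnorm ip u') ^+ 2 + 2 * complex.Re (ip u' v) + (vnorm ip v) ^+ 2.
  rewrite -(Reipww Hip) ip_exp // [ip v u'](ipC Hip) !ReD -!(Reipww Hip).
  have c1 : conjc (1 : R[i]) = 1 by apply/eqP; rewrite eq_complex /= oppr0 !eqxx.
  by rewrite c1 !mul1r ReJ; ring.
have n2 : vnorm ip u' = s * vnorm ip u by rewrite vnormZ // hsw.
have n3 : complex.Re (ip u' v) <= s * complex.Re `|ip u v|.
  by rewrite ipZl //; apply: le_trans (Re_le_nz _) _; rewrite nzM hsw.
have hsu : s * vnorm ip u = vnorm ip v by rewrite /s mulfVK // gt_eqF.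
rewrite n1 n2 hsu in e1.
have key : 2 * s * (2 * complex.Re `|z|) <=
    2 * s * (m * (vnorm ip u * vnorm ip v + complex.Re `|ip u v|)).
  have hm' := ler_wpM2l hm0 n3.
  have hvv : vnorm ip v ^+ 2 = s * vnorm ip u * vnorm ip v by rewrite hsu expr2.
  rewrite hvv in e1.
  nra.
have h2s : 0 < 2 * s by apply: mulr_gt0.
by rewrite ler_pM2l in key.
Qed.
Theorem lemma2p7 (R : realType) (V : lmodType R[i]) (ip : V -> V -> R[i])
  (Hip : is_inner_product ip) (Hcomplete : ip_complete ip)
  (A X B Astar : {linear V -> V})
  (hA : bounded_op ip A) (hX : bounded_op ip X) (hB : bounded_op ip B)
  (hAstar : is_adjoint ip A Astar) (hXpos : positive_op ip X)
  (x y : V) (hBx : B x != 0) :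
  complex.Re `|ip (A (X (B x))) y| <=
    opnorm ip X / 2 *
      (2 * vnorm ip (B x) * vnorm ip (Astar y)
       - inf [set (vnorm ip (B x - l *: Astar y)) ^+ 2 | l in [set: R[i]]]
           / (2 * vnorm ip (B x)) * vnorm ip (Astar y)).
Proof.
have [m0 hm] := opnorm_props Hip hX.
rewrite hAstar.
set u := B x in hBx *; set v := Astar y; set m := opnorm ip X in m0 hm *.
set I := inf _.
have hu : 0 < vnorm ip u.
  rewrite lt0r vnorm_ge0 andbT; apply/eqP => /(vnorm0 Hip) h.
  by rewrite h eqxx in hBx.
have [hv|hv] := eqVneq (vnorm ip v) 0.
  rewrite hv !mulr0 subr0 mulr0 (vnorm0 Hip hv) ip0r // normr0.
  by [].
have hv0 : 0 < vnorm ip v by rewrite lt0r hv vnorm_ge0.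
have hc := core Hip hXpos m0 hm v hu.
have hcs := CS Hip u v.
have c0 := nz_ge0 (ip u v).
have Z0 := nz_ge0 (ip (X u) v).
set c := complex.Re `|ip u v| in hc hcs c0.
set Z := complex.Re `|ip (X u) v| in hc Z0 *.
have hI : I <= vnorm ip u ^+ 2 - c ^+ 2 / vnorm ip v ^+ 2.
  rewrite -proj_id //; apply: ge_inf.
    by exists 0 => _ [l _ <-]; exact: sqr_ge0.
  by exists (ip u v / ip v v) => //; rewrite scaleNr.
set a := vnorm ip u * vnorm ip v.
have a0 : 0 < a by apply: mulr_gt0.
have hI2 : I / (2 * vnorm ip u) * vnorm ip v <= (a ^+ 2 - c ^+ 2) / (2 * a).
  have -> : (a ^+ 2 - c ^+ 2) / (2 * a) =
      (vnorm ip u ^+ 2 - c ^+ 2 / vnorm ip v ^+ 2) / (2 * vnorm ip u) * vnorm ip v.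
    rewrite /a; field.
    by rewrite !gt_eqF.
  apply: ler_wpM2r; first exact: vnorm_ge0.
  by apply: ler_wpM2r => //; rewrite invr_ge0 mulr_ge0 // vnorm_ge0.
set q := (a ^+ 2 - c ^+ 2) / (2 * a) in hI2.
have hq : 2 * a * q = a ^+ 2 - c ^+ 2 by rewrite /q mulrC mulfVK // mulf_neq0 // gt_eqF.
rewrite -/a.
apply: (@le_trans _ _ (m / 2 * (2 * a - q))).
  rewrite -(ler_pM2l a0).
  have := mulr_ge0 m0 (sqr_ge0 (a - c)).
  have h1 := ler_wpM2l (ltW a0) hc.
  have h2 : m * (2 * a * q) = m * (a ^+ 2 - c ^+ 2) by rewrite hq.
  rewrite /a in h1 h2 *.
  nra.
apply: ler_wpM2l; first by rewrite divr_ge0.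
rewrite /a mulrA; lra.
Qed.
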